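(* Let $q$ be a prime power and let $s,t,n,k$ be nonnegative integers with $t$ even and $n=2k$. Let $\beta\in\mathbb{F}_{q^k}$, $\gamma\in\mathbb{F}_q^*$, and $\delta\in\mathbb{F}_{q^n}$ with $\delta^{q^k}=-\delta$. Then $$f(x)=(x^{q^k}-x+\delta)^t+\beta\,\mathrm{Tr}(x)+\gamma x^{q^s}$$ is a permutation polynomial of $\mathbb{F}_{q^n}$ if and only if $\mathrm{Tr}(\beta\gamma^{-1})+1\neq0$.
   Context: $\mathrm{Tr}$ denotes the trace function from $\mathbb{F}_{q^n}$ to $\mathbb{F}_q$, $\mathrm{Tr}(x)=x+x^q+\cdots+x^{q^{n-1}}$. A permutation polynomial of $\mathbb{F}_{q^n}$ is one inducing a bijection of $\mathbb{F}_{q^n}$. *)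

(* Defs.v *)
From mathcomp Require Import all_boot all_order all_algebra all_field.
Set Implicit Arguments. Unset Strict Implicit. Unset Printing Implicit Defensive.
Import GRing.Theory.
Local Open Scope ring_scope.

Definition trace_q (L : finFieldType) (q n : nat) (x : L) : L :=
  \sum_(i < n) x ^+ (q ^ i).

Definition is_perm_map (L : finFieldType) (f : L -> L) : Prop := bijective f.

(* Main.v *)
Require Import Defs.
From mathcomp Require Import all_boot all_order all_algebra all_field.
From mathcomp Require Import ring.
Import GRing.Theory.
Local Open Scope ring_scope.

Section Frob.
Context {L : finFieldType} {p e q n : nat}.
Hypotheses (hp : prime p) (hq : q = (p ^ e)%N) (hL : #|L| = (q ^ n)%N).

Lemma pc : p \in [pchar L].
Proof using hp hq hL. by apply: (@card_finPcharP _ p (e * n)) => //; rewrite hL hq expnM. Qed.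

Lemma qnat m : [pchar L].-nat (q ^ m)%N.
Proof using hp hq hL. by rewrite (eq_pnat _ (pcharf_eq pc)) hq -expnM pnatX pnat_id. Qed.

Lemma qgt0 m : (0 < q ^ m)%N.
Proof using hp hq hL. by rewrite hq -expnM expn_gt0 prime_gt0. Qed.

Lemma frD m (x y : L) : (x + y) ^+ (q ^ m) = x ^+ (q ^ m) + y ^+ (q ^ m).
Proof using hp hq hL. exact: exprDn_pchar (qnat m). Qed.

Lemma frN m (x : L) : (- x) ^+ (q ^ m) = - x ^+ (q ^ m).
Proof using hp hq hL. exact: exprNn_pchar (qnat m). Qed.

Lemma frB m (x y : L) : (x - y) ^+ (q ^ m) = x ^+ (q ^ m) - y ^+ (q ^ m).
Proof using hp hq hL. by rewrite frD frN. Qed.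

Lemma fr0 m : (0 : L) ^+ (q ^ m) = 0.
Proof using hp hq hL. by rewrite expr0n eqn0Ngt qgt0. Qed.

Lemma frinj m (x y : L) : x ^+ (q ^ m) = y ^+ (q ^ m) -> x = y.
Proof using hp hq hL.
move=> h; have : (x - y) ^+ (q ^ m) == 0 by rewrite frB h subrr.
by rewrite expf_eq0 subr_eq0 => /andP[_ /eqP].
Qed.

Lemma frX m j (x : L) : (x ^+ (q ^ m)) ^+ (q ^ j) = (x ^+ (q ^ j)) ^+ (q ^ m).
Proof using hp hq hL. by rewrite -!exprM mulnC. Qed.

Lemma fix_q (c : L) m : c ^+ q = c -> c ^+ (q ^ m) = c.
Proof using hp hq hL.
move=> hc; elim: m => [|m IH]; first by rewrite expn0 expr1.
by rewrite expnSr exprM IH hc.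
Qed.

Lemma fcard (x : L) : x ^+ (q ^ n) = x.
Proof using hp hq hL. by rewrite -hL expf_card. Qed.

Lemma frsum m (F : 'I_n -> L) :
  (\sum_(i < n) F i) ^+ (q ^ m) = \sum_(i < n) (F i) ^+ (q ^ m).
Proof using hp hq hL. exact: (big_morph (fun x => x ^+ (q ^ m)) (frD m) (fr0 m)). Qed.

Lemma trD (x y : L) : trace_q q n (x + y) = trace_q q n x + trace_q q n y.
Proof using hp hq hL. by rewrite /trace_q -big_split; apply: eq_bigr => i _; rewrite frD. Qed.

Lemma trB (x y : L) : trace_q q n (x - y) = trace_q q n x - trace_q q n y.
Proof using hp hq hL. by rewrite /trace_q -sumrB; apply: eq_bigr => i _; rewrite frB. Qed.

Lemma tr0 : trace_q q n (0 : L) = 0.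
Proof using hp hq hL. by rewrite /trace_q big1 // => i _; rewrite fr0. Qed.

Lemma trZ (c x : L) : c ^+ q = c -> trace_q q n (c * x) = c * trace_q q n x.
Proof using hp hq hL.
move=> hc; rewrite /trace_q mulr_sumr; apply: eq_bigr => i _.
by rewrite exprMn (fix_q _ _ hc).
Qed.

Lemma trq (x : L) : (trace_q q n x) ^+ q = trace_q q n x.
Proof using hp hq hL.
have h1 := frsum 1; rewrite expn1 in h1.
rewrite /trace_q h1.
have hx := fcard x.
move: hx h1; case: n hL => [|m] _ hx _; first by rewrite !big_ord0.
rewrite big_ord_recr big_ord_recl /= addrC; congr (_ + _).
  by rewrite -exprM -expnSr hx expn0 expr1.
by apply: eq_bigr => i _; rewrite -exprM -expnSr.
Qed.

Lemma tr_fixed m (x : L) : (trace_q q n x) ^+ (q ^ m) = trace_q q n x.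
Proof using hp hq hL. exact: fix_q (trq x). Qed.

Lemma trfrob m (x : L) : trace_q q n (x ^+ (q ^ m)) = (trace_q q n x) ^+ (q ^ m).
Proof using hp hq hL. by rewrite /trace_q frsum; apply: eq_bigr => i _; rewrite frX. Qed.

End Frob.

Theorem mainTheorem4 (L : finFieldType) (p e q s t n k : nat)
  (hp : prime p) (hq : q = (p ^ e)%N) (hL : #|L| = (q ^ n)%N)
  (ht : ~~ odd t) (hn : n = (2 * k)%N)
  (beta gamma delta : L)
  (hbeta : beta ^+ (q ^ k) = beta)
  (hgamma : gamma ^+ q = gamma) (hgamma0 : gamma != 0)
  (hdelta : delta ^+ (q ^ k) = - delta) :
  is_perm_map (fun x : L =>
     (x ^+ (q ^ k) - x + delta) ^+ t + beta * trace_q q n x + gamma * x ^+ (q ^ s))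
  <-> trace_q q n (beta / gamma) + 1 != 0.
Proof.
have QQ (x : L) : (x ^+ (q ^ k)) ^+ (q ^ k) = x.
  by rewrite -exprM -expnD addnn -mul2n -hn (fcard hp hq hL).
have gQ m : gamma ^+ (q ^ m) = gamma by exact: (fix_q hp hq hL).
have giq : gamma^-1 ^+ q = gamma^-1 by rewrite exprVn hgamma.
have trdiv : trace_q q n (beta / gamma) = gamma^-1 * trace_q q n beta.
  by rewrite mulrC (trZ hp hq hL).
set f := fun x : L => _.
split.
- move=> bij; apply/eqP => htr.
  have inj : injective (fun x : L => x ^+ (q ^ s)) := frinj hp hq hL s.
  have [g gK Kg] := injF_bij inj.
  set d := g (- (beta / gamma)).
  have hd : d ^+ (q ^ s) = - (beta / gamma) by rewrite /d Kg.
  have trd : trace_q q n d = 1.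
    rewrite -(tr_fixed hp hq hL s) -(trfrob hp hq hL) hd.
    rewrite -sub0r (trB hp hq hL) (tr0 hp hq hL) sub0r.
    by move/eqP: htr; rewrite addr_eq0 => /eqP ->; rewrite opprK.
  have dQ : d ^+ (q ^ k) = d.
    apply: (frinj hp hq hL s).
    by rewrite (frX hp hq hL) hd (frN hp hq hL) exprMn exprVn hbeta gQ.
  have : f d = f 0.
    rewrite /f dQ subrr add0r trd hd !(fr0 hp hq hL) subrr add0r (tr0 hp hq hL).
    by rewrite !mulr0 !addr0 mulr1 mulrN mulrCA divff // mulr1 addrK.
  move/(bij_inj bij) => d0.
  by move: trd; rewrite d0 (tr0 hp hq hL) => /eqP; rewrite eq_sym oner_eq0.
- move=> htr; apply: injF_bij => x z E.
  pose h := fun w : L => w ^+ (q ^ k) - w + delta.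
  have hfix w : (h w ^+ t) ^+ (q ^ k) = h w ^+ t.
    rewrite -exprAC /h !(frD hp hq hL) (frN hp hq hL) QQ hdelta.
    have -> : w + - w ^+ (q ^ k) + - delta = - (w ^+ (q ^ k) - w + delta) by ring.
    by rewrite exprNn -signr_odd (negbTE ht) expr0 mul1r.
  pose d := x - z.
  have E2 : gamma * d ^+ (q ^ s) + beta * trace_q q n d = h z ^+ t - h x ^+ t.
    have H0 : gamma * d ^+ (q ^ s) + beta * trace_q q n d - (h z ^+ t - h x ^+ t)
              = f x - f z.
      by rewrite /d (frB hp hq hL) (trB hp hq hL) /f /h; ring.
    by apply/eqP; rewrite -subr_eq0 H0 E subrr.
  have dsQ : d ^+ (q ^ k) = d.
    have E3 := congr1 (fun w => w ^+ (q ^ k)) E2; simpl in E3.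
    rewrite [in RHS](frB hp hq hL) !hfix -E2 in E3.
    rewrite (frD hp hq hL) !exprMn gQ hbeta (tr_fixed hp hq hL) in E3.
    move/addIr/(mulfI hgamma0): E3.
    rewrite (frX hp hq hL); exact: (frinj hp hq hL s).
  have hxz : h x = h z.
    apply/eqP; rewrite -subr_eq0.
    have -> : h x - h z = d ^+ (q ^ k) - d by rewrite /h /d (frB hp hq hL); ring.
    by rewrite dsQ subrr.
  rewrite hxz subrr in E2.
  have trE := congr1 (trace_q q n) E2.
  rewrite (trD hp hq hL) (trZ hp hq hL _ _ hgamma) (trfrob hp hq hL) (tr_fixed hp hq hL) in trE.
  rewrite [beta * _]mulrC (trZ hp hq hL _ _ (trq hp hq hL d)) (tr0 hp hq hL) in trE.
  have trd0 : trace_q q n d = 0.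
    apply/eqP; move: htr; rewrite trdiv; apply: contraNT => nz.
    have : trace_q q n d * (gamma + trace_q q n beta) == 0.
      by rewrite mulrDr [trace_q q n d * gamma]mulrC trE.
    rewrite mulf_eq0 (negbTE nz) /= (addrC gamma) addr_eq0 => /eqP ->.
    by rewrite mulrN mulVf // addNr.
  rewrite trd0 mulr0 addr0 in E2.
  move/eqP: E2; rewrite mulf_eq0 (negbTE hgamma0) /= => /eqP ds0.
  have : d = 0 by apply: (frinj hp hq hL s); rewrite ds0 (fr0 hp hq hL).
  by rewrite /d => /eqP; rewrite subr_eq0 => /eqP.
Qed.
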